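(* Let $G=(V,E)$ be a tree with boundary with degree sequence $\pi$. Let $(v_1,u_1),(v_2,u_2)\in E$ be edges such that $u_2$ lies on the geodesic path from $v_1$ to $v_2$ but $u_1$ does not. Let $G'=(V,E')$ be obtained by replacing the edges $(v_1,u_1)$ and $(v_2,u_2)$ by the edges $(v_1,v_2)$ and $(u_1,u_2)$. Then $G'$ is a tree with boundary with degree sequence $\pi$ and the same set of boundary vertices as $G$. Moreover, for every function $f:V\to\mathbb{R}$ with $f|_{\partial V}=0$ and $f\not\equiv 0$ satisfying $f(v_1)\ge f(u_2)$ and $f(v_2)\ge f(u_1)$, we have $\mathcal{R}_{G'}(f)\le\mathcal{R}_G(f)$, with strict inequality if both $f(v_1)>f(u_2)$ and $f(v_2)>f(u_1)$.
   Context: A tree with boundary is a finite tree $G=(V,E)$ whose vertex set is partitioned into the set $\partial V$ of boundary vertices, which are exactly the vertices of degree $1$, and the set $V_0$ of interior vertices, which are exactly the vertices of degree at least $2$; both sets are nonempty. Its degree sequence is the multiset of vertex degrees. For a graph $H$ on vertex set $V$ with edge set $E_H$, the Rayleigh quotient of $f:V\to\mathbb{R}$, $f\not\equiv0$, is $\mathcal{R}_H(f)=\sum_{(u,v)\in E_H}(f(u)-f(v))^2\big/\sum_{v\in V}f(v)^2$. *)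

(* Defs.v *)
From HB Require Import structures.
From mathcomp Require Import all_boot all_order all_algebra.
Set Implicit Arguments. Unset Strict Implicit. Unset Printing Implicit Defensive.
Import Order.TTheory GRing.Theory Num.Theory.

Definition simple_graph (V : finType) (e : rel V) : Prop :=
  symmetric e /\ irreflexive e.

Definition deg (V : finType) (e : rel V) (x : V) : nat := #|[pred y | e x y]|.

Definition connected_graph (V : finType) (e : rel V) : Prop :=
  forall x y : V, connect e x y.

Definition acyclic_graph (V : finType) (e : rel V) : Prop :=
  forall p : seq V, 3 <= size p -> uniq p -> ~~ cycle e p.

Definition is_tree (V : finType) (e : rel V) : Prop :=
  [/\ simple_graph e, connected_graph e & acyclic_graph e].

Definition tree_with_boundary (V : finType) (e : rel V) : Prop :=
  [/\ is_tree e, (forall x, 1 <= deg e x),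
      (exists x, deg e x == 1) & (exists x, 2 <= deg e x)].

Definition boundary (V : finType) (e : rel V) : {set V} :=
  [set x | deg e x == 1].

(* degree sequence as a multiset: the list of degrees up to permutation *)
Definition degree_seq (V : finType) (e : rel V) : seq nat :=
  [seq deg e x | x <- enum V].

(* a geodesic (shortest path) from a to b, given as its list of vertices
   after a *)
Definition geodesic (V : finType) (e : rel V) (a b : V) (p : seq V) : Prop :=
  [/\ path e a p, last a p = b &
      forall q : seq V, path e a q -> last a q = b -> size p <= size q].

Definition on_geodesic (V : finType) (e : rel V) (a b u : V) : Prop :=
  exists p, geodesic e a b p /\ u \in a :: p.

Definition same_pair (V : eqType) (x y a b : V) : bool :=
  ((x == a) && (y == b)) || ((x == b) && (y == a)).

Definition switch (V : finType) (e : rel V) (v1 u1 v2 u2 : V) : rel V :=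
  fun x y =>
    (e x y && ~~ same_pair x y v1 u1 && ~~ same_pair x y v2 u2)
    || same_pair x y v1 v2 || same_pair x y u1 u2.

Local Open Scope ring_scope.

(* Rayleigh quotient: sum over (unordered) edges of (f u - f v)^2 divided by
   sum of f^2; each unordered edge appears twice among ordered pairs, hence
   the factor 1/2. *)
Definition rayleigh (R : realFieldType) (V : finType) (e : rel V) (f : V -> R) : R :=
  ((\sum_(x : V) \sum_(y : V | e x y) (f x - f y) ^+ 2) / 2)
  / (\sum_(x : V) f x ^+ 2).

(* Main.v *)
Require Import Defs.
From HB Require Import structures.
From mathcomp Require Import all_boot all_order all_algebra zify ring lra.
From Stdlib Require Import FunctionalExtensionality.
Import Order.TTheory GRing.Theory Num.Theory.
Set Implicit Arguments. Unset Strict Implicit. Unset Printing Implicit Defensive.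

Definition rm (V : finType) (g : rel V) (a b : V) : rel V :=
  fun x y => g x y && ~~ same_pair x y a b.

Lemma same_pairC (V : eqType) (x y a b : V) : same_pair y x a b = same_pair x y a b.
Proof. by rewrite /same_pair; case: (x==a); case: (y==b); case: (x==b); case: (y==a). Qed.
Lemma same_pairC2 (V : eqType) (x y a b : V) : same_pair x y b a = same_pair x y a b.
Proof. by rewrite /same_pair orbC. Qed.

Lemma rm_sym (V : finType) (g : rel V) a b : symmetric g -> symmetric (rm g a b).
Proof. by move=> sg x y; rewrite /rm sg same_pairC. Qed.

Lemma tree_bridge (V : finType) (e : rel V) : simple_graph e -> acyclic_graph e ->
  forall a b, e a b -> ~~ connect (rm e a b) a b.
Proof.
move=> [sym irr] acyc a b eab; apply/negP => /connectP [p pp lp].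
move: lp; case: (shortenP pp) => p' pp' up' _ lp.
have pe : path e a p' by apply: sub_path pp' => x y /andP[].
case: p' pp' up' lp pe => [|c [|d q]] /=.
- by move=> _ _ lp; rewrite lp irr in eab.
- move=> /andP[/andP[_ H] _] _ lp; rewrite lp in H.
  by rewrite /same_pair !eqxx in H.
- move=> _ up lp pe.
  have := acyc [:: a, c, d & q] isT up; rewrite /cycle rcons_path /= -lp.
  by rewrite pe sym eab.
Qed.

Lemma bridge_acyclic (V : finType) (g : rel V) : symmetric g ->
  (forall x y, g x y -> ~~ connect (rm g x y) x y) -> acyclic_graph g.
Proof.
move=> sym br [|x [|y [|z r]]] // _ Hu; apply/negP => /andP[gxy Hc].
move: Hu => /andP[xn /andP[ys _]].
rewrite in_cons negb_or in xn; case/andP: xn => xy xs.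
have Hc' : path g y (rcons (z :: r) x) := Hc.
move: Hc'; rewrite rcons_path => /andP[ps gl].
have hl : last z r \in z :: r := mem_last z r.
have /negP := br y x (etrans (sym y x) gxy); apply.
apply/connectP; exists (rcons (z :: r) x); last by rewrite last_rcons.
rewrite rcons_path; apply/andP; split.
  have H : {in predC1 x &, subrel g (rm g y x)}.
    move=> a b /= ha hb gab; rewrite /rm gab /same_pair.
    by rewrite (negbTE ha) (negbTE hb) !andbF.
  apply: (sub_in_path H) ps.
  apply/allP => w; rewrite in_cons => /orP[/eqP -> | ws] /=; first by rewrite eq_sym.
  by apply/eqP => wx; rewrite -wx ws in xs.
rewrite /rm gl /same_pair eqxx /=.
have -> : (last z r == y) = false by apply/negbTE; apply/eqP => h; rewrite h in hl; rewrite hl in ys.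
have -> : (last z r == x) = false by apply/negbTE; apply/eqP => h; rewrite h in hl; rewrite hl in xs.
by [].
Qed.

Lemma same_pair_swap (V : eqType) (x y a b : V) : same_pair x y a b = same_pair a b x y.
Proof. by rewrite /same_pair !(eq_sym x) !(eq_sym y) [(b == x) && _]andbC. Qed.

Lemma same_pair_xx (V : eqType) (x a b : V) : a != b -> same_pair x x a b = false.
Proof.
move=> ab; rewrite /same_pair; apply/negbTE; rewrite negb_or !negb_and.
by case: (eqVneq x a) => [->|]; rewrite ?ab ?orbT // eq_sym ab orbT.
Qed.

Lemma sp_e (V : eqType) (e : rel V) x y a b : symmetric e -> e a b -> same_pair x y a b -> e x y.
Proof. by move=> sym eab; case/orP => /andP[/eqP-> /eqP->] //; rewrite sym. Qed.

Lemma conn_same (V : finType) (g : rel V) a b z w : symmetric g ->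
  connect (rm g a b) z w -> connect (rm g a b) a z = connect (rm g a b) a w.
Proof.
move=> sym czw.
exact: (closed_connect (connect_closed (sym_connect_sym (rm_sym a b sym)) a) czw).
Qed.

Lemma ind_id (E A B C D : bool) : (A ==> E) -> (B ==> E) -> ~~(A && B) -> ~~ (C && D) ->
  (C ==> ~~E) -> (D ==> ~~E) -> (((E && ~~A && ~~B) || C || D) + A + B = E + C + D)%N.
Proof. by case: E; case: A; case: B; case: C; case: D. Qed.

Lemma card_sum (V : finType) (P : pred V) : #|P| = (\sum_y (P y : nat))%N.
Proof. rewrite -sum1_card big_mkcond /=; apply: eq_bigr => y _; rewrite unfold_in; by case: (P y). Qed.

Lemma sum_pair_nat (V : finType) (a b x : V) : a != b ->
  (\sum_y (same_pair x y a b : nat))%N = ((x == a) + (x == b))%N.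
Proof.
move=> ab; rewrite /same_pair.
have s1 : forall c, (\sum_(y : V) (y == c : nat))%N = 1%N.
  by move=> c; rewrite (bigD1 c) //= eqxx big1 // => y /negbTE ->.
case: (eqVneq x a) => [xa|xa] /=; first subst x.
  rewrite (negbTE ab) /= addn0 -(s1 b); apply: eq_bigr => y _; by rewrite orbF.
case: (eqVneq x b) => [xb|xb] /=; first subst x.
  by rewrite -(s1 a); apply: eq_bigr => y _.
by rewrite big1.
Qed.

Section Real.
Variable R : realFieldType.
Local Open Scope ring_scope.

Lemma sum_pair_R (V : finType) (a b : V) (h : V -> V -> R) : a != b ->
  \sum_x \sum_y (same_pair x y a b)%:R * h x y = h a b + h b a.
Proof.
move=> ab.
have s1 : forall c d, \sum_x \sum_y ((x == c) && (y == d))%:R * h x y = h c d.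
  move=> c d; rewrite (bigD1 c) //= [X in _ + X]big1 ?addr0.
    rewrite (bigD1 d) //= !eqxx mul1r [X in _ + X]big1 ?addr0 // => y yd.
    by rewrite (negbTE yd) andbF mul0r.
  move=> x xc; apply: big1 => y _; by rewrite (negbTE xc) mul0r.
rewrite -(s1 a b) -(s1 b a) -big_split; apply: eq_bigr => x _.
rewrite -big_split; apply: eq_bigr => y _.
transitivity (((x==a)&&(y==b))%:R * h x y + ((x==b)&&(y==a))%:R * h x y); last by [].
rewrite -mulrDl -natrD /same_pair.
congr (_ %:R * _).
case: (eqVneq x a) => [->|xa]; first by rewrite (negbTE ab) /=; case: (y == b).
by rewrite /=; case: (x == b); case: (y == a).
Qed.

Lemma if_nat (b : bool) (t : R) : (if b then t else 0) = b%:R * t.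
Proof. by case: b; rewrite ?mul1r ?mul0r. Qed.

End Real.

Lemma geo_prefix (V : finType) (e : rel V) a b c p :
  path e a p -> last a p = b ->
  (forall q, path e a q -> last a q = b -> size p <= size q) ->
  c \in p -> c != b ->
  exists q, [/\ path e a q, last a q = c, b \notin a :: q & {subset q <= p}].
Proof.
move=> pp lp pmin cp cb.
case/splitPr: cp pp lp pmin => p1 p2 pp lp pmin.
exists (rcons p1 c); split.
- move: pp; rewrite cat_path => /andP[pp1 /= /andP[e1 _]]; by rewrite rcons_path pp1 e1.
- by rewrite last_rcons.
- rewrite in_cons negb_or; apply/andP; split.
    apply/eqP => ba; have := pmin [::] isT (esym ba).
    by rewrite size_cat /= addnS.
  rewrite mem_rcons in_cons negb_or eq_sym cb /=; apply/negP => bp1.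
  case/splitPr: bp1 pp pmin => s1 s2 pp pmin.
  have := pmin (rcons s1 b); rewrite last_rcons rcons_path.
  move: pp; rewrite -catA cat_path => /andP[-> /= /andP[-> _]].
  move=> /(_ isT erefl); rewrite !size_cat size_rcons /=; rewrite size_cat /=; lia.
- by move=> z; rewrite mem_rcons mem_cat !in_cons => /orP[->|->]; rewrite ?orbT.
Qed.

Lemma sp_na (V : eqType) (z w a b : V) : z != a -> w != a -> same_pair z w a b = false.
Proof. by move=> /negbTE za /negbTE wa; rewrite /same_pair za wa /= andbF. Qed.
Lemma sp_nb (V : eqType) (z w a b : V) : z != b -> w != b -> same_pair z w a b = false.
Proof. by move=> /negbTE zb /negbTE wb; rewrite /same_pair zb wb /= andbF. Qed.

Lemma arith4 (d' d a b c k : nat) : (d' + (a + b) + (c + k) = d + (a + c) + (b + k))%N -> d' = d.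
Proof. lia. Qed.

Lemma cut_lemma (V : finType) (g : rel V) x y (T : V -> bool) :
  (forall z w, g z w -> T z = T w) -> T x != T y -> ~~ connect g x y.
Proof.
move=> cl nT; apply/negP => /connectP [p pp ly]; subst y.
elim: p x pp nT => [|z p IH] x /=; first by rewrite eqxx.
by move=> /andP[gxz pz]; rewrite (cl _ _ gxz); exact: IH.
Qed.

Unset Implicit Arguments.
Local Open Scope ring_scope.
Ltac simp_neq := repeat (match goal with H : (?a == ?b) = false |- _ => progress rewrite H end); rewrite ?eqxx /=.

Theorem lemma3 (V : finType) (e : rel V) (v1 u1 v2 u2 : V) :
  tree_with_boundary e ->
  e v1 u1 -> e v2 u2 ->
  on_geodesic e v1 v2 u2 -> ~ on_geodesic e v1 v2 u1 ->
  let e' := switch e v1 u1 v2 u2 in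
  [/\ tree_with_boundary e',
      perm_eq (degree_seq e') (degree_seq e),
      boundary e' = boundary e &
      forall (R : realFieldType) (f : V -> R),
        (forall x, x \in boundary e -> f x = 0) ->
        (exists x, f x != 0) ->
        f u2 <= f v1 -> f u1 <= f v2 ->
        rayleigh e' f <= rayleigh e f /\
        (f u2 < f v1 -> f u1 < f v2 -> rayleigh e' f < rayleigh e f)].
Proof.
move=> [[[sym irr] conn acyc] deg1 ex1 ex2] e11 e22 [p [[pp lp pmin] u2p]] nu1 e'.
have u1p : u1 \notin v1 :: p.
  by apply/negP => h; apply: nu1; exists p; split.
have v2p : v2 \in v1 :: p by rewrite -lp mem_last.
have u1u2 : u1 != u2 by apply/eqP => h; rewrite h u2p in u1p.
have u1v2 : u1 != v2 by apply/eqP => h; rewrite h v2p in u1p.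
have v1u1 : v1 != u1 by apply/eqP => h; rewrite h irr in e11.
have v2u2 : v2 != u2 by apply/eqP => h; rewrite h irr in e22.
have e11' : e u1 v1 by rewrite sym.
have e22' : e u2 v2 by rewrite sym.
case: (eqVneq v1 u2) => [v1u2 | v1u2].
  subst u2.
  have ee : e' = e.
    apply: functional_extensionality => x; apply: functional_extensionality => y.
    rewrite /e' /switch (same_pairC2 x y v1 v2) (same_pairC2 x y u1 v1).
    case Hc: (same_pair x y v1 v2).
      by rewrite orbT (sp_e sym e22' Hc).
    case Hd: (same_pair x y u1 v1).
      by rewrite orbT (sp_e sym e11' Hd).
    by rewrite !andbT !orbF.
  rewrite ee; split; [by split => //; split | exact: perm_refl | by [] | ].
  by move=> R f _ _ _ _; split => //; rewrite ltxx.
have u2p' : u2 \in p by move: u2p; rewrite in_cons eq_sym (negbTE v1u2).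
have u2v2 : u2 != v2 by rewrite eq_sym.
have [q [pq lq v2q qp]] := geo_prefix pp lp pmin u2p' u2v2.
have u1q : u1 \notin v1 :: q.
  apply/negP; rewrite in_cons => /orP[/eqP h|h]; first by rewrite h eqxx in v1u1.
  by move: u1p; rewrite in_cons (qp _ h) orbT.
have v1v2 : v1 != v2 by move: v2q; rewrite in_cons negb_or eq_sym => /andP[].
have connP : forall R : rel V, {in [pred z | (z != u1) && (z != v2)] &, subrel e R} ->
    connect R v1 u2.
  move=> R H; apply/connectP; exists q; last by rewrite lq.
  apply: (sub_in_path H) pq; apply/allP => z zq /=.
  apply/andP; split; apply/eqP => h; subst z; [by rewrite zq in u1q | by rewrite zq in v2q].
have n1 := negbTE v1u1; have n1' : (u1 == v1) = false by rewrite eq_sym n1.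
have n2 := negbTE v1v2; have n2' : (v2 == v1) = false by rewrite eq_sym n2.
have n3 := negbTE v1u2; have n3' : (u2 == v1) = false by rewrite eq_sym n3.
have n4 := negbTE u1v2; have n4' : (v2 == u1) = false by rewrite eq_sym n4.
have n5 := negbTE u1u2; have n5' : (u2 == u1) = false by rewrite eq_sym n5.
have n6 := negbTE v2u2; have n6' : (u2 == v2) = false by rewrite eq_sym n6.
have ce' : connect e' v1 u2.
  apply: connP => z w; rewrite !inE => /andP[z1 z2] /andP[w1 w2] ezw.
  by rewrite /e' /switch ezw (sp_nb v1 z1 w1) (sp_na u2 z2 w2).
have c1 : connect (rm e u1 v1) v1 u2.
  apply: connP => z w; rewrite !inE => /andP[z1 z2] /andP[w1 w2] ezw.
  by rewrite /rm ezw (sp_na v1 z1 w1).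
have c2 : connect (rm e v2 u2) v1 u2.
  apply: connP => z w; rewrite !inE => /andP[z1 z2] /andP[w1 w2] ezw.
  by rewrite /rm ezw (sp_na u2 z2 w2).
have br1 : ~~ connect (rm e u1 v1) u1 v1 := tree_bridge (conj sym irr) acyc e11'.
have br2 : ~~ connect (rm e v2 u2) v2 u2 := tree_bridge (conj sym irr) acyc e22.
have S1v1 := negbTE br1.
have S1u2 : connect (rm e u1 v1) u1 u2 = false by rewrite -(conn_same sym c1) S1v1.
have S1v2 : connect (rm e u1 v1) u1 v2 = false.
  have c1v2 : connect (rm e u1 v1) v1 v2.
    apply: connect_trans c1 (connect1 _).
    by rewrite /rm e22' /same_pair; simp_neq.
  by rewrite -(conn_same sym c1v2) S1v1.
have S1u1 : connect (rm e u1 v1) u1 u1 := connect0 _ _.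
have S2u2 := negbTE br2.
have S2v1 : connect (rm e v2 u2) v2 v1 = false by rewrite (conn_same sym c2) S2u2.
have S2u1 : connect (rm e v2 u2) v2 u1 = false.
  have h : rm e v2 u2 v1 u1 by rewrite /rm e11 /same_pair; simp_neq.
  by rewrite -(conn_same sym (connect1 h)) S2v1.
have S2v2 : connect (rm e v2 u2) v2 v2 := connect0 _ _.
have ne12 : ~~ e v1 v2.
  apply/negP => h; have sz : (size p <= 1)%N by apply: (pmin [:: v2]) => //=; rewrite h.
  move: sz; case Ep: (p) => [|w [|w' r]] //= _; rewrite Ep in u2p' lp; first by [].
  rewrite /= in lp; subst w; move: u2p'; rewrite inE => /eqP h2.
  by rewrite h2 eqxx in u2v2.
have ne34 : ~~ e u1 u2.
  apply/negP => h.
  have : connect (rm e u1 v1) u1 u2 by apply: connect1; rewrite /rm h /same_pair; simp_neq.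
  by rewrite S1u2.
have ind : forall x y, ((e' x y : nat) + same_pair x y v1 u1 + same_pair x y v2 u2
    = e x y + same_pair x y v1 v2 + same_pair x y u1 u2)%N.
  move=> x y; rewrite /e' /switch; apply: ind_id.
  - apply/implyP; exact: sp_e sym e11.
  - apply/implyP; exact: sp_e sym e22.
  - by apply/negP => /andP[]; rewrite /same_pair; case/orP => /andP[/eqP-> /eqP->]; simp_neq.
  - by apply/negP => /andP[]; rewrite /same_pair; case/orP => /andP[/eqP-> /eqP->]; simp_neq.
  - apply/implyP; case/orP => /andP[/eqP-> /eqP->]; [exact: ne12 | rewrite sym; exact: ne12].
  - apply/implyP; case/orP => /andP[/eqP-> /eqP->]; [exact: ne34 | rewrite sym; exact: ne34].
have degeq : forall x, deg e' x = deg e x.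
  move=> x.
  have H : (deg e' x + \sum_y (same_pair x y v1 u1 : nat) + \sum_y (same_pair x y v2 u2 : nat)
     = deg e x + \sum_y (same_pair x y v1 v2 : nat) + \sum_y (same_pair x y u1 u2 : nat))%N.
    rewrite /deg !card_sum -!big_split; apply: eq_bigr => y _ /=; exact: ind x y.
  rewrite !sum_pair_nat // in H; exact: arith4 H.
have sym' : symmetric e'.
  by move=> x y; rewrite /e' /switch (sym x y) !(same_pairC y x).
have irr' : irreflexive e'.
  by move=> x; rewrite /e' /switch irr /= !same_pair_xx.
have conn' : connected_graph e'.
  move=> x y; apply: (connect_sub _ (conn x y)) => a b eab.
  case Hab: (e' a b); first exact: connect1.
  have cs := sym_connect_sym sym'.
  have c11 : connect e' v1 u1.
    apply: (connect_trans ce' (connect1 _)).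
    by rewrite /e' /switch [same_pair u2 u1 u1 u2]/same_pair !eqxx !orbT.
  have c22 : connect e' v2 u2.
    apply: (connect_trans (connect1 _) ce').
    by rewrite /e' /switch [same_pair v2 v1 v1 v2]/same_pair !eqxx /= !orbT.
  move: Hab; rewrite /e' /switch eab /=.
  case HA: (same_pair a b v1 u1).
    by case/orP: HA => /andP[/eqP-> /eqP->] _; [exact: c11 | rewrite cs; exact: c11].
  case HB: (same_pair a b v2 u2).
    by case/orP: HB => /andP[/eqP-> /eqP->] _; [exact: c22 | rewrite cs; exact: c22].
  by [].
have closedT : forall x y (T : V -> bool),
    (forall z w, e z w -> ~~ same_pair z w v1 u1 -> ~~ same_pair z w v2 u2 ->
       ~~ same_pair z w x y -> T z = T w) ->
    (~~ same_pair v1 v2 x y -> T v1 = T v2) -> (~~ same_pair u1 u2 x y -> T u1 = T u2) ->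
    forall z w, rm e' x y z w -> T z = T w.
  move=> x y T He Hc Hd z w.
  rewrite /rm /e' /switch => /andP[/orP[/orP[/andP[/andP[ezw nA] nB] | hC] | hD] nxy].
  - exact: He.
  - case/orP: hC => /andP[/eqP ? /eqP ?]; subst z w; first exact: Hc.
    by rewrite same_pairC in nxy; symmetry; apply: Hc.
  - case/orP: hD => /andP[/eqP ? /eqP ?]; subst z w; first exact: Hd.
    by rewrite same_pairC in nxy; symmetry; apply: Hd.
have br' : forall x y, e' x y -> ~~ connect (rm e' x y) x y.
  move=> x y exy; move: (exy); rewrite /e' /switch.
  move=> /orP[/orP[/andP[/andP[exy0 nA] nB] | hC] | hD].
  - pose S := fun z => connect (rm e x y) x z.
    pose S1 := fun z => connect (rm e u1 v1) u1 z.
    pose S2 := fun z => connect (rm e v2 u2) v2 z.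
    have Sx : S x := connect0 _ _.
    have Sy : S y = false := negbTE (tree_bridge (conj sym irr) acyc exy0).
    have Scl : forall z w, e z w -> ~~ same_pair z w x y -> S z = S w.
      by move=> z w ezw h; apply: (conn_same sym); apply: connect1; rewrite /rm ezw h.
    have S1cl : forall z w, e z w -> ~~ same_pair z w v1 u1 -> S1 z = S1 w.
      move=> z w ezw h; apply: (conn_same sym); apply: connect1.
      by rewrite /rm ezw (same_pairC2 z w v1 u1) h.
    have S2cl : forall z w, e z w -> ~~ same_pair z w v2 u2 -> S2 z = S2 w.
      by move=> z w ezw h; apply: (conn_same sym); apply: connect1; rewrite /rm ezw h.
    apply: (cut_lemma (T := fun z => if S v1 == S v2 then S z else S z (+) S1 z (+) S2 z)).
      apply: closedT.
      + move=> z w ezw nA' nB' nxy' /=.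
        by rewrite (Scl _ _ ezw nxy') (S1cl _ _ ezw nA') (S2cl _ _ ezw nB').
      + move=> _ /=; case: eqP => [//|/eqP hne].
        rewrite /S1 /S2 S1v1 S2v1 S1v2 S2v2; move: hne.
        by case: (S v1); case: (S v2).
      + move=> _ /=.
        have Su1 : S u1 = S v1.
          by apply: Scl e11' _; rewrite same_pair_swap same_pairC2.
        have Su2 : S u2 = S v2.
          by apply: Scl e22' _; rewrite same_pair_swap same_pairC2.
        rewrite Su1 Su2 /S1 /S2 S1u1 S1u2 S2u1 S2u2.
        by case: (S v1); case: (S v2).
    rewrite /= (S1cl x y exy0 nA) (S2cl x y exy0 nB) Sx Sy.
    by case: ifP => _; case: (S1 y); case: (S2 y).
  - apply: (cut_lemma (T := fun z => connect (rm e v2 u2) v2 z)).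
      apply: closedT.
      + move=> z w ezw _ nB' _; apply: (conn_same sym); apply: connect1.
        by rewrite /rm ezw nB'.
      + by move=> h; rewrite same_pair_swap hC in h.
      + by rewrite S2u1 S2u2.
    by case/orP: hC => /andP[/eqP-> /eqP->]; rewrite S2v1 S2v2.
  - apply: (cut_lemma (T := fun z => connect (rm e u1 v1) u1 z)).
      apply: closedT.
      + move=> z w ezw nA' _ _; apply: (conn_same sym); apply: connect1.
        by rewrite /rm ezw (same_pairC2 z w v1 u1) nA'.
      + by rewrite S1v1 S1v2.
      + by move=> h; rewrite same_pair_swap hD in h.
    by case/orP: hD => /andP[/eqP-> /eqP->]; rewrite S1u1 S1u2.
have acyc' : acyclic_graph e' := bridge_acyclic sym' br'.
split.
- split.
  + split; [by split | exact: conn' | exact: acyc'].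
  + by move=> x; rewrite degeq.
  + by case: ex1 => x hx; exists x; rewrite degeq.
  + by case: ex2 => x hx; exists x; rewrite degeq.
- by rewrite /degree_seq (eq_map degeq) perm_refl.
- by apply/setP => x; rewrite !inE degeq.
move=> R f _ [x0 nz] h1 h2.
pose h := fun x y => (f x - f y) ^+ 2.
pose Sg := fun g : rel V => \sum_x \sum_(y | g x y) h x y.
have Sgi : forall g : rel V, Sg g = \sum_x \sum_y (g x y)%:R * h x y.
  move=> g; apply: eq_bigr => x _; rewrite big_mkcond; apply: eq_bigr => y _.
  by rewrite if_nat.
have key : Sg e' + (h v1 u1 + h u1 v1) + (h v2 u2 + h u2 v2)
         = Sg e + (h v1 v2 + h v2 v1) + (h u1 u2 + h u2 u1).
  rewrite -!sum_pair_R // !Sgi -!big_split; apply: eq_bigr => x _ /=.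
  rewrite -!big_split; apply: eq_bigr => y _ /=.
  by rewrite -!mulrDl -!natrD ind.
have D0 : 0 < \sum_x f x ^+ 2.
  rewrite (bigD1 x0) //=.
  have a0 : 0 < f x0 ^+ 2 by rewrite lt_def sqrf_eq0 nz sqr_ge0.
  have b0 : 0 <= \sum_(i | i != x0) f i ^+ 2 by apply: sumr_ge0 => i _; exact: sqr_ge0.
  lra.
have diff : rayleigh e f - rayleigh e' f = (Sg e - Sg e') / 2 / (\sum_x f x ^+ 2).
  by rewrite /rayleigh /Sg /h -!mulrBl.
have eqd : Sg e - Sg e' = 4 * ((f v1 - f u2) * (f v2 - f u1)).
  have -> : Sg e' = Sg e + (h v1 v2 + h v2 v1) + (h u1 u2 + h u2 u1)
                   - (h v1 u1 + h u1 v1) - (h v2 u2 + h u2 v2).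
    by rewrite -key; ring.
  rewrite /h; ring.
split.
  rewrite -subr_ge0 diff eqd; apply: divr_ge0; last exact: ltW D0.
  apply: divr_ge0; last lra.
  apply: mulr_ge0; first lra.
  by apply: mulr_ge0; rewrite subr_ge0.
move=> s1 s2; rewrite -subr_gt0 diff eqd; apply: divr_gt0 => //.
apply: divr_gt0; last lra.
apply: mulr_gt0; first lra.
by apply: mulr_gt0; rewrite subr_gt0.
Qed.
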